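(* Let $G$ be an $\alpha_i$-metric graph ($i\ge 0$ an integer), let $x,y$ be a pair of mutually distant vertices of $G$, and let $z$ be a middle vertex of an arbitrary shortest path connecting $x$ and $y$. Then $e(z)\le rad(G)+2i+1$. Furthermore, there is a vertex $c\in S_{\lfloor d(x,y)/2\rfloor}(x,y)$ with $e(c)\le rad(G)+i$.
   Context: All graphs are finite, connected, unweighted, undirected, simple; $d(u,v)$ is the shortest-path distance. $I(u,v)=\{x: d(u,x)+d(x,v)=d(u,v)\}$; $S_k(u,v)=\{x\in I(u,v): d(u,x)=k\}$. A graph is $\alpha_i$-metric if for all vertices $u,v,w,x$: whenever $v\in I(u,w)$, $w\in I(v,x)$ and $v,w$ are adjacent, then $d(u,x)\ge d(u,v)+d(v,x)-i$. $e(v)=\max_u d(u,v)$, $rad(G)=\min_v e(v)$. Vertices $x,y$ are mutually distant if $e(x)=e(y)=d(x,y)$. A middle vertex of a shortest $(x,y)$-path is a vertex $z$ on it with $\{d(x,z),d(y,z)\}=\{\lfloor d(x,y)/2\rfloor,\lceil d(x,y)/2\rceil\}$. *)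

(* Defs.v *)
From mathcomp Require Import all_boot all_order.
Set Implicit Arguments. Unset Strict Implicit. Unset Printing Implicit Defensive.

Section Graph.
Variables (T : finType) (g : rel T).

Definition simple_graph := symmetric g /\ irreflexive g.
Definition connected_graph := forall u v : T, connect g u v.

Fixpoint walkn (n : nat) (u v : T) : bool :=
  if n is n'.+1 then [exists w, g u w && walkn n' w v] else u == v.

(* shortest-path distance: least n with a walk (equivalently a path) of
   length n from u to v; in a connected graph such an n is < #|T|. *)
Definition dist (u v : T) : nat := find (fun n => walkn n u v) (iota 0 #|T|).

Definition interval (u v : T) : pred T := fun x => dist u x + dist x v == dist u v.

Definition slice (k : nat) (u v : T) : pred T :=
  fun x => (x \in interval u v) && (dist u x == k).

(* alpha_i-metric (nat arithmetic: d(u,x) >= d(u,v)+d(v,x)-i, written additively) *)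
Definition alpha_metric (i : nat) : Prop :=
  forall u v w x : T, v \in interval u w -> w \in interval v x -> g v w ->
    dist u v + dist v x <= dist u x + i.

Definition ecc (v : T) : nat := \max_(u : T) dist u v.
Definition rad : nat := \big[minn/#|T|]_(v : T) ecc v.

Definition mutually_distant (x y : T) : Prop := ecc x = dist x y /\ ecc y = dist x y.

Definition shortest_path (x y : T) (p : seq T) : Prop :=
  [/\ path g x p, last x p = y & size p = dist x y].

Definition middle_vertex (x y : T) (p : seq T) (z : T) : Prop :=
  z \in x :: p /\
  ((dist x z = (dist x y)./2 /\ dist y z = uphalf (dist x y)) \/
   (dist x z = uphalf (dist x y) /\ dist y z = (dist x y)./2)).

End Graph.

(* Main.v *)
Require Import Defs.
From mathcomp Require Import all_boot all_order.
From mathcomp Require Import zify.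
From Stdlib Require Import Lia.
Set Implicit Arguments. Unset Strict Implicit. Unset Printing Implicit Defensive.

Lemma walkn_cat (T : finType) (g : rel T) m n u v w :
  walkn g m u v -> walkn g n v w -> walkn g (m + n) u w.
Proof.
elim: m u => [|m IH] u /=; first by move/eqP->.
case/existsP=> u' /andP[Hu Hw] Hn; rewrite /=.
by apply/existsP; exists u'; rewrite Hu /= (IH _ Hw Hn).
Qed.

Lemma walkn_snoc (T : finType) (g : rel T) n u v w :
  walkn g n u v -> g v w -> walkn g n.+1 u w.
Proof.
move=> H Hvw; rewrite -addn1; apply: (walkn_cat H).
by apply/existsP; exists w; rewrite Hvw eqxx.
Qed.

Lemma walkn_sym (T : finType) (g : rel T) (Hs : symmetric g) n u v :
  walkn g n u v -> walkn g n v u.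
Proof.
elim: n u v => [|n IH] u v /=; first by move/eqP->.
case/existsP=> w /andP[Huw Hw]; apply: (walkn_snoc (IH _ _ Hw)).
by rewrite Hs.
Qed.

Lemma path_walkn (T : finType) (g : rel T) u p :
  path g u p -> walkn g (size p) u (last u p).
Proof.
elim: p u => [|a p IH] u /=; first by [].
case/andP=> Hua Hp; apply/existsP; exists a; by rewrite Hua (IH _ Hp).
Qed.

Lemma dist_le (T : finType) (g : rel T) m u v :
  walkn g m u v -> dist g u v <= m.
Proof.
move=> H; rewrite /dist; case: (ltnP m #|T|) => Hm.
  rewrite leqNgt; apply/negP => Hlt.
  have := before_find 0 Hlt; rewrite nth_iota // add0n H; done.
by apply: leq_trans (find_size _ _) _; rewrite size_iota.
Qed.

Lemma dist_walk (T : finType) (g : rel T) (Hc : connected_graph g) u v :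
  walkn g (dist g u v) u v.
Proof.
have [p Hp ->] := connectP (Hc u v).
case: (shortenP Hp) => p' Hp' Hu _.
have Hw := path_walkn Hp'.
have Hsz : size p' < #|T|.
  have := max_card (mem (u :: p')); rewrite (card_uniqP Hu) /=; done.
have Hd : dist g u (last u p') < #|T| := leq_ltn_trans (dist_le Hw) Hsz.
have Hhas : has (fun n => walkn g n u (last u p')) (iota 0 #|T|).
  by apply/hasP; exists (size p'); rewrite ?mem_iota ?add0n.
have := nth_find 0 Hhas; rewrite -/(dist g u (last u p')) nth_iota // add0n.
Qed.

Section Metric.
Variables (T : finType) (g : rel T).
Hypotheses (Hs : symmetric g) (Hc : connected_graph g).
Notation d := (dist g).

Lemma dist0 u : d u u = 0.
Proof. by apply/eqP; rewrite -leqn0; apply: (@dist_le _ _ 0); rewrite /= eqxx. Qed.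

Lemma dist_eq0 u v : d u v = 0 -> u = v.
Proof. by move=> H; have := dist_walk Hc u v; rewrite H /= => /eqP. Qed.

Lemma distC u v : d u v = d v u.
Proof.
by apply/eqP; rewrite eqn_leq !dist_le // walkn_sym // dist_walk.
Qed.

Lemma dist_tri u v w : d u w <= d u v + d v w.
Proof. by apply: dist_le; apply: walkn_cat; apply: dist_walk. Qed.

Lemma dist_adj u v : g u v -> d u v <= 1.
Proof. by move=> H; apply: dist_le => /=; apply/existsP; exists v; rewrite H eqxx. Qed.

Lemma dist_step u v n : d u v = n.+1 -> exists2 w, g u w & d w v = n.
Proof.
move=> H; have := dist_walk Hc u v; rewrite H /= => /existsP [w /andP [Huw Hw]].
exists w => //; have le := dist_le Hw; have := dist_tri u w v.
have := dist_adj Huw; lia.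
Qed.

End Metric.

Section Main.
Variables (T : finType) (g : rel T) (i : nat).
Hypotheses (Hs : symmetric g) (Hirr : irreflexive g) (Hc : connected_graph g)
  (Ha : alpha_metric g i).
Notation d := (dist g).

Lemma inI u v w : (w \in interval g u v) = (d u w + d w v == d u v).
Proof. by []. Qed.
Lemma inS k u v w : (w \in slice g k u v) = (d u w + d w v == d u v) && (d u w == k).
Proof. by []. Qed.

Lemma alphaP u v w x : d u v + d v w = d u w -> d v w + d w x = d v x -> g v w ->
  d u v + d v x <= d u x + i.
Proof.
move=> H1 H2 H3; apply: (Ha (_ : v \in interval g u w) (_ : w \in interval g v x) H3).
  by apply/eqP.
by apply/eqP.
Qed.

Lemma dist1 u v : g u v -> d u v = 1.
Proof.
move=> H; have := dist_adj H; have : d u v != 0.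
  by apply/eqP => /(dist_eq0 Hc) E; move: H; rewrite E Hirr.
lia.
Qed.

Lemma dist_leT u v : d u v <= #|T|.
Proof. by rewrite /dist; apply: leq_trans (find_size _ _) _; rewrite size_iota. Qed.

Lemma pred_slice x y k a : a \in slice g k.+1 x y -> exists2 a', g a a' & a' \in slice g k x y.
Proof.
rewrite inS => /andP[/eqP H1 /eqP H2].
have E : d a x = k.+1 by rewrite (distC Hs Hc).
have [w Haw Hw] := dist_step Hc E.
have Hxw : d x w = k by rewrite (distC Hs Hc).
exists w => //; rewrite inS Hxw eqxx andbT; apply/eqP.
have := dist_tri Hc x w y; have := dist_tri Hc w a y; have := dist1 Haw.
rewrite (distC Hs Hc w a) (distC Hs Hc x w); lia.
Qed.

Lemma thin x y k a b : a \in slice g k x y -> b \in slice g k x y -> d a b <= i.+1.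
Proof.
elim: k a b => [|k IH] a b.
  rewrite !inS => /andP[_ /eqP /(dist_eq0 Hc) <-] /andP[_ /eqP /(dist_eq0 Hc) <-].
  by rewrite dist0.
move=> Ha' Hb'; have [a' Haa' Ha1] := pred_slice Ha'; have [b' Hbb' Hb1] := pred_slice Hb'.
have IHab := IH _ _ Ha1 Hb1.
move: Ha' Hb' Ha1 Hb1; rewrite !inS => /andP[/eqP A1 /eqP A2] /andP[/eqP B1 /eqP B2]
  /andP[/eqP A3 /eqP A4] /andP[/eqP B3 /eqP B4].
rewrite leqNgt; apply/negP => HD.
have daa := dist1 Haa'; have dbb := dist1 Hbb'.
have t1 := dist_tri Hc a' a b; have t2 := dist_tri Hc a a' b.
have t3 := dist_tri Hc a' b' b.
rewrite (distC Hs Hc a' a) in t1.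
have Hab' : d a b <= d a' b.
  rewrite leqNgt; apply/negP => Hlt.
  have Eya := distC Hs Hc y a; have Eya' := distC Hs Hc y a'; have Eyb := distC Hs Hc y b.
  have P1 : d y a + d a a' = d y a' by lia.
  have P2 : d a a' + d a' b = d a b by lia.
  have := alphaP P1 P2 Haa'; lia.
have Hb'b : g b' b by rewrite Hs.
have E1 := distC Hs Hc b' b.
have Eby := distC Hs Hc b y; have Eb'y := distC Hs Hc b' y; have Ea'y := distC Hs Hc a' y.
have P1 : d a' b' + d b' b = d a' b by lia.
have P2 : d b' b + d b y = d b' y by lia.
have := alphaP P1 P2 Hb'b; lia.
Qed.

Lemma center (x0 : T) : exists c0, forall t, d t c0 <= rad g.
Proof.
rewrite /rad; elim/big_ind: _.
- by exists x0 => t; apply: dist_leT.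
- move=> a b [ca Ha1] [cb Hb1]; case: (leqP a b) => h.
    by exists ca.
  by exists cb.
- by move=> v _; exists v => t; rewrite /ecc; apply: (@leq_bigmax _ (fun u => d u v)).
Qed.

Lemma part2 x y k r c0 : (forall t, d t c0 <= r) -> (forall t, d t x <= d x y) ->
  (forall t, d t y <= d x y) -> k <= r -> d x y <= k + r ->
  forall a, a \in slice g k x y -> exists2 c, c \in slice g k x y & ecc g c <= r + i.
Proof.
move=> Hc0 Hx Hy Hkr Hdr a Ha0.
pose phi c := \sum_(s : T) (d s c - (r + i)).
suff : forall n c, c \in slice g k x y -> phi c < n ->
  exists2 c, c \in slice g k x y & ecc g c <= r + i by apply; [exact: Ha0 | exact: ltnSn].
elim=> [|n IH] c Hcs Hn; first by [].
case: (boolP [exists t, r + i < d t c]); last first.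
  rewrite negb_exists => /forallP H; exists c => //.
  by apply/bigmax_leqP => t _; have := H t; rewrite -leqNgt.
case/existsP => t Ht.
have Hct := distC Hs Hc c t.
have [E HE] : exists E, d c t = E.+1 by exists (d c t).-1; lia.
have [w Hcw Hwt] := dist_step Hc HE.
have dcw := dist1 Hcw.
have Hwc : g w c by rewrite Hs.
move: Hcs; rewrite inS => /andP[/eqP C1 /eqP C2].
have Hxt := Hx t; have Hyt := Hy t.
have Ext := distC Hs Hc x t; have Eyt := distC Hs Hc y t.
have Eyc := distC Hs Hc y c; have Eyw := distC Hs Hc y w.
have Exy := distC Hs Hc x y.
have Hxw : d x w <= k.
  rewrite leqNgt; apply/negP => Hlt.
  have := dist_tri Hc x c w => T1.
  have P1 : d x c + d c w = d x w by lia.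
  have P2 : d c w + d w t = d c t by lia.
  have := alphaP P1 P2 Hcw; lia.
have Hyw : d w y <= d c y.
  rewrite leqNgt; apply/negP => Hlt.
  have := dist_tri Hc y c w => T1.
  have P1 : d y c + d c w = d y w by lia.
  have P2 : d c w + d w t = d c t by lia.
  have := alphaP P1 P2 Hcw; lia.
have Hws : w \in slice g k x y.
  have := dist_tri Hc x w y; have := dist_tri Hc x c w.
  rewrite inS => T1 T2; apply/andP; split; apply/eqP; lia.
apply: (IH w Hws).
have Hle : forall s, d s w - (r + i) <= d s c - (r + i).
  move=> s; have Esw := distC Hs Hc s w; have Esc := distC Hs Hc s c.
  case: (leqP (d w s) (d c s)) => hs; first by apply: leq_sub2r; lia.
  have := dist_tri Hc w c s; have := distC Hs Hc w c => Ewc T1.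
  have P1 : d t w + d w c = d t c by have := distC Hs Hc t w; lia.
  have P2 : d w c + d c s = d w s by lia.
  have := alphaP P1 P2 Hwc.
  have := dist_tri Hc t c0 s; have := Hc0 t; have := Hc0 s; have := distC Hs Hc c0 s.
  have := distC Hs Hc t c; have := distC Hs Hc t w.
  lia.
have Hlt : d t w - (r + i) < d t c - (r + i).
  have := distC Hs Hc t w; lia.
have : phi w < phi c.
  rewrite /phi (bigD1 t) //= [X in _ < X](bigD1 t) //=.
  have : \sum_(s | s != t) (d s w - (r + i)) <= \sum_(s | s != t) (d s c - (r + i)).
    by apply: leq_sum => s _; apply: Hle.
  lia.
lia.
Qed.
End Main.

Theorem lemma5 (T : finType) (g : rel T) (i : nat)
  (Hsimple : simple_graph g) (Hconn : connected_graph g)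
  (Halpha : alpha_metric g i)
  (x y : T) (Hxy : mutually_distant g x y)
  (p : seq T) (Hp : shortest_path g x y p)
  (z : T) (Hz : middle_vertex g x y p z) :
  ecc g z <= rad g + 2 * i + 1 /\
  exists2 c, c \in slice g (dist g x y)./2 x y & ecc g c <= rad g + i.
Proof.
case: Hsimple => Hs Hirr.
have [c0 Hc0] := center g x.
case: Hxy => Ex Ey.
have Hx : forall t, dist g t x <= dist g x y.
  by move=> t; rewrite -Ex; apply: (@leq_bigmax _ (fun u => dist g u x)).
have Hy : forall t, dist g t y <= dist g x y.
  by move=> t; rewrite -Ey; apply: (@leq_bigmax _ (fun u => dist g u y)).
have HD : dist g x y <= rad g + rad g.
  have := dist_tri Hconn x c0 y; have := Hc0 x; have := Hc0 y.
  have := distC Hs Hconn c0 y; lia.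
case: Hz => _ Hz.
have Eyz := distC Hs Hconn y z.
have Zs : z \in slice g (dist g x z) x y.
  rewrite inS eqxx andbT; apply/eqP; case: Hz => [[]|[]]; lia.
have Hk1 : dist g x z <= rad g by case: Hz => [[]|[]]; lia.
have Hk2 : dist g x y <= dist g x z + rad g by case: Hz => [[]|[]]; lia.
split.
  have [c Hcs Hce] := part2 Hs Hirr Hconn Halpha Hc0 Hx Hy Hk1 Hk2 Zs.
  have Hzc := thin Hs Hirr Hconn Halpha Zs Hcs.
  apply/bigmax_leqP => t _.
  have := dist_tri Hconn t c z; have := distC Hs Hconn z c.
  have : dist g t c <= ecc g c by apply: (@leq_bigmax _ (fun u => dist g u c)).
  lia.
have [a Ha] : exists a, a \in slice g (dist g x y)./2 x y.
  case: Hz => [[H1 H2]|[H1 H2]]; first by exists z; rewrite -H1.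
  case: (boolP (uphalf (dist g x y) == (dist g x y)./2)) => [/eqP E|NE].
    by exists z; rewrite -E -H1.
  have E : dist g x z = ((dist g x y)./2).+1 by move/eqP: NE; lia.
  rewrite E in Zs.
  by have [a' _ Ha'] := pred_slice Hs Hirr Hconn Zs; exists a'.
have Hh1 : (dist g x y)./2 <= rad g by lia.
have Hh2 : dist g x y <= (dist g x y)./2 + rad g by lia.
exact: (part2 Hs Hirr Hconn Halpha Hc0 Hx Hy Hh1 Hh2 Ha).
Qed.
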